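(* Let $m\ge n$, let $\mathbf{A}\in\mathbb{R}^{m\times n}$ have rank $\rho$, let $k<\rho$ be a positive integer, and let $\mathbf{b}\in\mathbb{R}^m$. Let $\mathbf{U}_k\in\mathbb{R}^{m\times k}$ contain the top $k$ left singular vectors of $\mathbf{A}$, so that $\mathbf{A}_k=\mathbf{U}_k\mathbf{U}_k^{T}\mathbf{A}$, and let $\tilde{\mathbf{U}}_k\in\mathbb{R}^{m\times k}$ be any matrix with orthonormal columns, with $\tilde{\mathbf{A}}_k=\tilde{\mathbf{U}}_k\tilde{\mathbf{U}}_k^{T}\mathbf{A}$. Let $\mathbf{x}_k=\mathbf{A}_k^{+}\mathbf{b}$, $\tilde{\mathbf{x}}_k=\tilde{\mathbf{A}}_k^{+}\mathbf{b}$, and $\Delta=\|\mathbf{A}\tilde{\mathbf{x}}_k-\mathbf{A}\mathbf{x}_k\|_2$. Then $$\Delta\le\frac{2\sigma_1^2(\mathbf{A})}{\sigma_k(\tilde{\mathbf{A}}_k)\,\sigma_k(\mathbf{A})}\,\|\tilde{\mathbf{U}}_k\tilde{\mathbf{U}}_k^{T}-\mathbf{U}_k\mathbf{U}_k^{T}\|_2\,\|\mathbf{b}\|_2,$$ where the right-hand side is interpreted as $+\infty$ if $\sigma_k(\tilde{\mathbf{A}}_k)=0$.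
   Context: $\sigma_i(\mathbf{M})$ denotes the $i$-th largest singular value of $\mathbf{M}$; $\mathbf{M}^{+}$ is the Moore–Penrose pseudoinverse; $\|\cdot\|_2$ is the Euclidean norm for vectors and the spectral norm for matrices. $\mathbf{A}_k$ is the best rank-$k$ approximation of $\mathbf{A}$ obtained from its SVD. *)

(* Defs.v *)
From HB Require Import structures.
From mathcomp Require Import all_boot all_order all_algebra.
From mathcomp Require Import boolp classical_sets reals.
Set Implicit Arguments. Unset Strict Implicit. Unset Printing Implicit Defensive.
Import Order.TTheory GRing.Theory Num.Theory.
Local Open Scope ring_scope.
Local Open Scope classical_set_scope.

Section Defs.
Variable R : realType.

Definition vnorm (p : nat) (v : 'cV[R]_p) : R :=
  Num.sqrt (\sum_(i < p) v i 0 ^+ 2).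

Definition specnorm (p q : nat) (M : 'M[R]_(p, q)) : R :=
  sup [set vnorm (M *m v) | v in [set v : 'cV[R]_q | vnorm v <= 1]].

Definition rdiag (p q : nat) (s : nat -> R) : 'M[R]_(p, q) :=
  \matrix_(i < p, j < q) (if (i : nat) == j then s i else 0).

Definition orthogonal_mx (p : nat) (U : 'M[R]_p) : Prop := U^T *m U = 1%:M.

(* A = U * Sigma * V^T is a (full) singular value decomposition of A:
   U, V orthogonal, Sigma = rdiag s with s nonnegative and nonincreasing on
   the min(p,q) diagonal positions. s i is the (i+1)-th largest singular value. *)
Definition is_svd (p q : nat) (A : 'M[R]_(p, q)) (U : 'M[R]_p) (s : nat -> R)
    (V : 'M[R]_q) : Prop :=
  [/\ orthogonal_mx U, orthogonal_mx V,
      (forall i, (i < minn p q)%N -> 0 <= s i),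
      (forall i j, (i <= j)%N -> (j < minn p q)%N -> s j <= s i)
    & A = U *m rdiag p q s *m V^T].

Definition is_pinv (p q : nat) (A : 'M[R]_(p, q)) (X : 'M[R]_(q, p)) : Prop :=
  [/\ A *m X *m A = A, X *m A *m X = X,
      (A *m X)^T = A *m X & (X *m A)^T = X *m A].

(* U_k U_k^T, where U_k = the first k columns of U *)
Definition topk_proj (p : nat) (U : 'M[R]_p) (k : nat) : 'M[R]_p :=
  \sum_(j < p | (j < k)%N) col j U *m (col j U)^T.

End Defs.

(* Main.v *)
Require Import Defs.
From HB Require Import structures.
From mathcomp Require Import all_boot all_order all_algebra.
From mathcomp Require Import boolp classical_sets reals.
From mathcomp Require Import ring lra zify.
Import Order.TTheory GRing.Theory Num.Theory.
Local Open Scope ring_scope.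
Set Implicit Arguments. Unset Strict Implicit. Unset Printing Implicit Defensive.

Local Open Scope ring_scope.

Section Aux.
Variable R : realType.
Implicit Types p q : nat.

Definition nsq p (v : 'cV[R]_p) : R := \sum_(i < p) v i 0 ^+ 2.
Definition ip p (u v : 'cV[R]_p) : R := \sum_(i < p) u i 0 * v i 0.

Lemma nsq_ge0 p (v : 'cV[R]_p) : 0 <= nsq v.
Proof. by apply: sumr_ge0 => i _; apply: sqr_ge0. Qed.

Lemma vnorm_ge0 p (v : 'cV[R]_p) : 0 <= vnorm v.
Proof. exact: sqrtr_ge0. Qed.

Lemma vnorm_sq p (v : 'cV[R]_p) : vnorm v ^+ 2 = nsq v.
Proof. by rewrite /vnorm sqr_sqrtr // nsq_ge0. Qed.

Lemma vnorm_leP p (v : 'cV[R]_p) (x : R) : 0 <= x -> nsq v <= x ^+ 2 -> vnorm v <= x.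
Proof.
move=> x0 h; rewrite -(ger0_norm x0) -sqrtr_sqr /vnorm ler_sqrt //.
exact: sqr_ge0.
Qed.

Lemma nsq_mx p (v : 'cV[R]_p) : nsq v = (v^T *m v) 0 0.
Proof. by rewrite /nsq mxE; apply: eq_bigr => i _; rewrite mxE expr2. Qed.

Lemma ip_mx p (u v : 'cV[R]_p) : ip u v = (u^T *m v) 0 0.
Proof. by rewrite /ip mxE; apply: eq_bigr => i _; rewrite mxE. Qed.

Lemma nsq_eq0 p (v : 'cV[R]_p) : nsq v = 0 -> v = 0.
Proof.
move=> /eqP; rewrite psumr_eq0; last by move=> i _; apply: sqr_ge0.
move=> /allP h; apply/matrixP => i j; rewrite (ord1 j) mxE.
have := h i (mem_index_enum _); rewrite implyTb sqrf_eq0 => /eqP //.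
Qed.

Lemma nsqD p (u v : 'cV[R]_p) : nsq (u + v) = nsq u + 2 * ip u v + nsq v.
Proof.
rewrite /nsq /ip mulr_sumr -!big_split /=; apply: eq_bigr => i _.
rewrite mxE; ring.
Qed.

Lemma nsqZ p (c : R) (v : 'cV[R]_p) : nsq (c *: v) = c ^+ 2 * nsq v.
Proof.
rewrite /nsq mulr_sumr; apply: eq_bigr => i _; rewrite mxE; ring.
Qed.

Lemma nsqN p (v : 'cV[R]_p) : nsq (- v) = nsq v.
Proof. by apply: eq_bigr => i _; rewrite mxE sqrrN. Qed.

Lemma vnormN p (v : 'cV[R]_p) : vnorm (- v) = vnorm v.
Proof. by rewrite /vnorm -!/(nsq _) nsqN. Qed.

Lemma ipZl p c (u v : 'cV[R]_p) : ip (c *: u) v = c * ip u v.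
Proof. rewrite /ip mulr_sumr; apply: eq_bigr => i _; rewrite mxE; ring. Qed.
Lemma ipZr p c (u v : 'cV[R]_p) : ip u (c *: v) = c * ip u v.
Proof. rewrite /ip mulr_sumr; apply: eq_bigr => i _; rewrite mxE; ring. Qed.
Lemma ipC p (u v : 'cV[R]_p) : ip u v = ip v u.
Proof. by apply: eq_bigr => i _; rewrite mulrC. Qed.
Lemma ipvv p (u : 'cV[R]_p) : ip u u = nsq u.
Proof. by apply: eq_bigr => i _; rewrite expr2. Qed.

Lemma cauchy_schwarz p (u v : 'cV[R]_p) : ip u v <= vnorm u * vnorm v.
Proof.
have [u0|] := eqVneq (nsq u) 0.
  by rewrite (nsq_eq0 u0) /ip big1 ?mulr_ge0 ?vnorm_ge0 // => i _; rewrite mxE mul0r.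
have [v0|] := eqVneq (nsq v) 0.
  by rewrite (nsq_eq0 v0) /ip big1 ?mulr_ge0 ?vnorm_ge0 // => i _; rewrite mxE mulr0.
move=> nv nu.
set a := vnorm u; set b := vnorm v.
have a0 : 0 < a by rewrite lt0r sqrtr_eq0 -ltNge lt0r nu nsq_ge0 sqrtr_ge0.
have b0 : 0 < b by rewrite lt0r sqrtr_eq0 -ltNge lt0r nv nsq_ge0 sqrtr_ge0.
have h := nsq_ge0 (b *: u + (- a) *: v).
rewrite nsqD !nsqZ ipZl ipZr -!vnorm_sq -/a -/b in h.
have : 0 <= a * b * (2 * (a * b - ip u v)).
  move: h; set z := ip u v; move=> h.
  suff -> : a * b * (2 * (a * b - z)) = b ^+ 2 * a ^+ 2 + 2 * (b * (- a * z)) + (- a) ^+ 2 * b ^+ 2 by [].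
  ring.
rewrite pmulr_rge0 ?mulr_gt0 // pmulr_rge0 // subr_ge0 //.
Qed.

Lemma vnormD p (u v : 'cV[R]_p) : vnorm (u + v) <= vnorm u + vnorm v.
Proof.
apply: vnorm_leP; first by rewrite addr_ge0 ?vnorm_ge0.
rewrite nsqD -!vnorm_sq.
have := cauchy_schwarz u v; nra.
Qed.

Lemma vnormB p (u v : 'cV[R]_p) : vnorm (u - v) <= vnorm u + vnorm v.
Proof. by rewrite -(vnormN v); apply: vnormD. Qed.

Lemma vnormZ p c (v : 'cV[R]_p) : vnorm (c *: v) = `|c| * vnorm v.
Proof. by rewrite /vnorm -!/(nsq _) nsqZ sqrtrM ?sqrtr_sqr // sqr_ge0. Qed.

End Aux.

Local Open Scope ring_scope.

Section Aux2.
Variable R : realType.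

Lemma nsq_mul p q (M : 'M[R]_(p, q)) (v : 'cV[R]_q) :
  nsq (M *m v) = (v^T *m (M^T *m M) *m v) 0 0.
Proof. by rewrite nsq_mx trmx_mul !mulmxA. Qed.

Lemma nsq_orth p (U : 'M[R]_p) (v : 'cV[R]_p) : U^T *m U = 1%:M -> nsq (U *m v) = nsq v.
Proof. by move=> h; rewrite nsq_mul h mulmx1 nsq_mx. Qed.

Lemma vnorm_orth p (U : 'M[R]_p) (v : 'cV[R]_p) : U^T *m U = 1%:M -> vnorm (U *m v) = vnorm v.
Proof. by move=> h; rewrite /vnorm -!/(nsq _) nsq_orth. Qed.

Lemma trB p q (A B : 'M[R]_(p, q)) : (A - B)^T = A^T - B^T.
Proof. by apply/matrixP => i j; rewrite !mxE. Qed.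
Lemma trD p q (A B : 'M[R]_(p, q)) : (A + B)^T = A^T + B^T.
Proof. by apply/matrixP => i j; rewrite !mxE. Qed.

Lemma subE1 (A B : 'M[R]_1) : (A - B) 0 0 = A 0 0 - B 0 0.
Proof. by rewrite !mxE. Qed.

Lemma tr11 (M : 'M[R]_1) : M^T 0 0 = M 0 0.
Proof. by rewrite mxE. Qed.

Lemma vnorm_proj p (M : 'M[R]_p) (v : 'cV[R]_p) : M^T *m M = M -> vnorm (M *m v) <= vnorm v.
Proof.
move=> h.
have e : nsq v = nsq (M *m v) + nsq ((1%:M - M) *m v).
  rewrite !nsq_mul h !nsq_mx.
  have -> : (1%:M - M)^T *m (1%:M - M) = 1%:M - M^T.
    rewrite trB trmx1 mulmxBl !mulmxBr !mul1mx !mulmx1 h opprB addrA subrK //.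
  rewrite mulmxBr mulmx1 mulmxBl subE1.
  have -> : (v^T *m M^T *m v) 0 0 = (v^T *m M *m v) 0 0.
    by rewrite -[LHS]tr11 !trmx_mul !trmxK mulmxA.
  by rewrite addrC subrK.
rewrite /vnorm -!/(nsq _) ler_sqrt ?nsq_ge0 // e lerDl nsq_ge0 //.
Qed.

End Aux2.

Local Open Scope ring_scope.

Section Aux3.
Variable R : realType.

Lemma sum_ind_const q (i : nat) (c : R) :
  \sum_(j < q) (if (i == j :> nat) then c else 0) = if (i < q)%N then c else 0.
Proof.
case: ltnP => iq.
  rewrite (bigD1 (Ordinal iq)) //= eqxx big1 ?addr0 // => j /negbTE hj.
  case: eqP => // e; move: hj; rewrite -(inj_eq val_inj) /= -e eqxx //.
rewrite big1 // => j _; case: eqP => // e; move: (ltn_ord j); by rewrite -e ltnNge iq.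
Qed.

Lemma sum_ind_sq q (i : nat) (F : 'I_q -> R) :
  (\sum_(j < q) (if (i == j :> nat) then F j else 0)) ^+ 2
  = \sum_(j < q) (if (i == j :> nat) then F j ^+ 2 else 0).
Proof.
case: (ltnP i q) => iq.
  rewrite (bigD1 (Ordinal iq)) //= eqxx big1 ?addr0; last first.
    move=> j /negbTE hj; case: eqP => // e; move: hj; rewrite -(inj_eq val_inj) /= -e eqxx //.
  rewrite (bigD1 (Ordinal iq)) //= eqxx big1 ?addr0 //.
  move=> j /negbTE hj; case: eqP => // e; move: hj; rewrite -(inj_eq val_inj) /= -e eqxx //.
rewrite !big1 ?expr0n // => j _; case: eqP => // e; move: (ltn_ord j); by rewrite -e ltnNge iq.
Qed.

Lemma rdiag_entry p q (d : nat -> R) (w : 'cV[R]_q) (i : 'I_p) :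
  (rdiag p q d *m w) i 0 = d i * \sum_(j < q) (if (i == j :> nat) then w j 0 else 0).
Proof.
rewrite mxE mulr_sumr; apply: eq_bigr => j _; rewrite mxE.
by case: eqP => _; rewrite ?mulr0 ?mul0r.
Qed.

Lemma nsq_rdiag p q (d : nat -> R) (w : 'cV[R]_q) :
  nsq (rdiag p q d *m w) = \sum_(j < q | (j < p)%N) (d j * w j 0) ^+ 2.
Proof.
rewrite /nsq.
transitivity (\sum_(i < p) \sum_(j < q) (if (i == j :> nat) then (d j * w j 0) ^+ 2 else 0)).
  apply: eq_bigr => i _; rewrite rdiag_entry mulr_sumr -sum_ind_sq; congr (_ ^+ 2).
  apply: eq_bigr => j _; case: eqP => [->|]; by rewrite ?mulr0.
rewrite exchange_big /= [RHS]big_mkcond; apply: eq_bigr => j _.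
transitivity (\sum_(i < p) (if ((j : nat) == i :> nat) then (d j * w j 0) ^+ 2 else 0)).
  by apply: eq_bigr => i _; rewrite eq_sym.
by rewrite sum_ind_const.
Qed.

Lemma rdiag_tr p q (d : nat -> R) : (rdiag p q d)^T = rdiag q p d.
Proof.
apply/matrixP => i j; rewrite !mxE eq_sym; case: eqP => // ->; done.
Qed.

Lemma rdiag_lmul p q (e d : nat -> R) :
  rdiag p p e *m rdiag p q d = rdiag p q (fun i => e i * d i).
Proof.
apply/matrixP => a j; rewrite !mxE (bigD1 a) //= !mxE eqxx big1 ?addr0.
  by case: eqP; rewrite ?mulr0.
move=> l /negbTE hl; rewrite !mxE; case: eqP; rewrite ?mul0r // => e'.
by move: hl; rewrite -(inj_eq val_inj) /= e' eqxx.
Qed.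

Lemma rdiag_rmul p q (d e : nat -> R) :
  rdiag p q d *m rdiag q q e = rdiag p q (fun i => d i * e i).
Proof.
apply/matrixP => a j; rewrite !mxE (bigD1 j) //= !mxE eqxx big1 ?addr0.
  by case: eqP => [->|]; rewrite ?mul0r.
move=> l /negbTE hl; rewrite !mxE; case: (l =P j :> nat); rewrite ?mulr0 // => e'.
by move: hl; rewrite -(inj_eq val_inj) /= e' eqxx.
Qed.

Lemma rdiag_mul0 p q r (d1 d2 : nat -> R) : (forall i, d1 i * d2 i = 0) ->
  rdiag p q d1 *m rdiag q r d2 = 0.
Proof.
move=> h; apply/matrixP => a b; rewrite !mxE big1 // => l _; rewrite !mxE.
case: eqP => [e1|]; rewrite ?mul0r //; case: eqP => [e2|]; rewrite ?mulr0 //.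
by rewrite e1 h.
Qed.

Lemma rdiag_mulsq p q (d1 d2 : nat -> R) :
  rdiag p q d1 *m rdiag q p d2 = rdiag p p (fun i => if (i < q)%N then d1 i * d2 i else 0).
Proof.
apply/matrixP => a b; rewrite !mxE.
transitivity (\sum_(l < q) (if (a == l :> nat) then (if (a == b :> nat) then d1 a * d2 a else 0) else 0)).
  apply: eq_bigr => l _; rewrite !mxE.
  case: (a =P l :> nat) => [e1|]; rewrite ?mul0r //.
  case: (l =P b :> nat) => [e2|ne]; case: (a =P b :> nat) => [e3|ne3]; rewrite ?mulr0 //.
    by rewrite e1.
  by exfalso; apply: ne3; rewrite e1.
  by exfalso; apply: ne; rewrite -e1.
rewrite sum_ind_const; case: eqP; case: ltnP => //.
Qed.

Lemma rdiag_add p q (d1 d2 : nat -> R) : rdiag p q d1 + rdiag p q d2 = rdiag p q (fun i => d1 i + d2 i).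
Proof. by apply/matrixP => a b; rewrite !mxE; case: eqP; rewrite ?addr0. Qed.
Lemma rdiag_opp p q (d : nat -> R) : - rdiag p q d = rdiag p q (fun i => - d i).
Proof. by apply/matrixP => a b; rewrite !mxE; case: eqP; rewrite ?oppr0. Qed.
Lemma rdiag1 p : rdiag p p (fun _ => 1) = 1%:M :> 'M[R]_p.
Proof. by apply/matrixP => a b; rewrite !mxE; case: eqP => [/val_inj ->|ne]; rewrite ?eqxx // ; case: eqP => // e; case: ne; rewrite e. Qed.

End Aux3.

Local Open Scope ring_scope.

Section Aux4.
Local Open Scope classical_set_scope.
Variable R : realType.

Lemma entry_le_vnorm p (v : 'cV[R]_p) (j : 'I_p) : `|v j 0| <= vnorm v.
Proof.
rewrite -sqrtr_sqr /vnorm ler_sqrt ?nsq_ge0 //.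
rewrite (bigD1 j) //= lerDl; apply: sumr_ge0 => i _; apply: sqr_ge0.
Qed.

Lemma sq_sum_le p (a : 'I_p -> R) : (forall i, 0 <= a i) ->
  \sum_i a i ^+ 2 <= (\sum_i a i) ^+ 2.
Proof.
move=> h; rewrite expr2 mulr_sumr; apply: ler_sum => i _.
rewrite expr2; apply: ler_wpM2r => //; rewrite (bigD1 i) //= lerDl; exact: sumr_ge0.
Qed.

Lemma vnorm_mul_crude p q (M : 'M[R]_(p, q)) (v : 'cV[R]_q) :
  vnorm v <= 1 -> vnorm (M *m v) <= \sum_i \sum_j `|M i j|.
Proof.
move=> hv; apply: vnorm_leP; first by do 2 (apply: sumr_ge0 => ? _); exact: normr_ge0.
apply: (@le_trans _ _ (\sum_i (\sum_j `|M i j|) ^+ 2)); last first.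
  by apply: sq_sum_le => i; apply: sumr_ge0 => ? _; exact: normr_ge0.
apply: ler_sum => i _.
have h : `|(M *m v) i 0| <= \sum_j `|M i j|.
  rewrite mxE; apply: (le_trans (ler_norm_sum _ _ _)); apply: ler_sum => j _.
  rewrite normrM; apply: ler_piMr => //; apply: le_trans (entry_le_vnorm _ _) hv.
rewrite -real_normK ?num_real //; apply: lerXn2r => //; rewrite ?nnegrE ?normr_ge0 //.
by apply: le_trans h.

Qed.

Lemma specnorm_ub p q (M : 'M[R]_(p, q)) (v : 'cV[R]_q) :
  vnorm v <= 1 -> vnorm (M *m v) <= specnorm M.
Proof.
move=> hv; apply: ub_le_sup; last by exists v.
exists (\sum_i \sum_j `|M i j|) => x [w hw <-]; exact: vnorm_mul_crude.
Qed.

Lemma vnorm0 p : vnorm (0 : 'cV[R]_p) = 0.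
Proof. by rewrite /vnorm big1 ?sqrtr0 // => i _; rewrite mxE expr0n. Qed.

Lemma specnorm_ge0 p q (M : 'M[R]_(p, q)) : 0 <= specnorm M.
Proof.
have h : vnorm (M *m (0:'cV[R]_q)) <= specnorm M by apply: specnorm_ub; rewrite vnorm0 ler01.
by rewrite mulmx0 vnorm0 in h.
Qed.

Lemma specnorm_bound p q (M : 'M[R]_(p, q)) (v : 'cV[R]_q) :
  vnorm (M *m v) <= specnorm M * vnorm v.
Proof.
have [v0|nz] := eqVneq (vnorm v) 0.
  have e : v = 0 by apply: nsq_eq0; rewrite -vnorm_sq v0 expr0n.
  by rewrite e mulmx0 !vnorm0 mulr0.
have c0 : 0 < vnorm v by rewrite lt0r nz vnorm_ge0.
have h := @specnorm_ub p q M ((vnorm v)^-1 *: v).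
rewrite -scalemxAr !vnormZ ger0_norm ?invr_ge0 ?vnorm_ge0 // mulVf // in h.
have := h (lexx _); rewrite -(ler_pM2l c0) mulrA mulfV // mul1r mulrC //.
Qed.

End Aux4.

Local Open Scope ring_scope.

Section Aux5.
Variable R : realType.

Lemma sq_le_le (a b : R) : 0 <= a -> 0 <= b -> a ^+ 2 <= b ^+ 2 -> a <= b.
Proof. move=> ha hb h; nra. Qed.

Lemma orthT p (V : 'M[R]_p) : orthogonal_mx V -> (V^T)^T *m V^T = 1%:M.
Proof. by rewrite /orthogonal_mx trmxK => h; apply: mulmx1C. Qed.

Lemma rdiag_upper p q (d : nat -> R) (w : 'cV[R]_q) c :
  (forall i, (i < minn p q)%N -> d i ^+ 2 <= c ^+ 2) ->
  nsq (rdiag p q d *m w) <= c ^+ 2 * nsq w.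
Proof.
move=> h; rewrite nsq_rdiag /nsq mulr_sumr big_mkcond /=; apply: ler_sum => j _.
case: ifP => jp.
  rewrite exprMn; apply: ler_wpM2r; first exact: sqr_ge0.
  by apply: h; rewrite leq_min jp ltn_ord.
by rewrite mulr_ge0 ?sqr_ge0.
Qed.

Lemma svd_upper p q (M : 'M[R]_(p, q)) U d V c :
  orthogonal_mx U -> orthogonal_mx V -> M = U *m rdiag p q d *m V^T -> 0 <= c ->
  (forall i, (i < minn p q)%N -> d i ^+ 2 <= c ^+ 2) ->
  forall w, vnorm (M *m w) <= c * vnorm w.
Proof.
move=> hU hV -> c0 hd w.
rewrite -!mulmxA vnorm_orth // mulmxA.
rewrite -(vnorm_orth w (orthT hV)).
apply: sq_le_le; rewrite ?mulr_ge0 ?vnorm_ge0 //.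
by rewrite exprMn !vnorm_sq -mulmxA; apply: rdiag_upper.
Qed.

Lemma svd_upperT p q (M : 'M[R]_(p, q)) U d V c :
  orthogonal_mx U -> orthogonal_mx V -> M = U *m rdiag p q d *m V^T -> 0 <= c ->
  (forall i, (i < minn p q)%N -> d i ^+ 2 <= c ^+ 2) ->
  forall w, vnorm (M^T *m w) <= c * vnorm w.
Proof.
move=> hU hV hM c0 hd; apply: (svd_upper hV hU) => //.
  by rewrite hM !trmx_mul trmxK rdiag_tr mulmxA.
by move=> i; rewrite minnC; apply: hd.
Qed.

Lemma pinv_bound p q (M : 'M[R]_(p, q)) (Z : 'M[R]_(q, p)) U d V c :
  orthogonal_mx U -> orthogonal_mx V -> M = U *m rdiag p q d *m V^T -> 0 < c ->
  (forall i, (i < minn p q)%N -> d i = 0 \/ c <= d i) ->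
  is_pinv M Z -> forall w, c * vnorm (Z *m w) <= vnorm w.
Proof.
move=> hU hV hM c0 hd [P1 P2 P3 P4] w.
set u := Z *m w.
have hu : u = M^T *m (Z^T *m u).
  by rewrite mulmxA -trmx_mul P4 /u !mulmxA P2.
have hMT : M^T = V *m rdiag q p d *m U^T by rewrite hM !trmx_mul trmxK rdiag_tr mulmxA.
set t := U^T *m (Z^T *m u).
set y := rdiag q p d *m t.
have hy : V^T *m u = y.
  by rewrite {1}hu hMT -!mulmxA (mulmxA V^T) (hV : V^T *m V = 1%:M) mul1mx.
have nu : vnorm u = vnorm y by rewrite -hy vnorm_orth // orthT.
have hMu : M *m u = U *m (rdiag p q d *m y) by rewrite hM -hy !mulmxA.
have hyj : forall j : 'I_q, y j 0 = d j * \sum_(l < p) (if (j == l :> nat) then t l 0 else 0).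
  by move=> j; rewrite /y rdiag_entry.
have hyp : forall j : 'I_q, (p <= j)%N -> y j 0 = 0.
  move=> j pj; rewrite hyj big1 ?mulr0 // => l _; case: eqP => // e.
  by move: (ltn_ord l); rewrite -e ltnNge pj.
have key : c ^+ 2 * nsq y <= nsq (M *m u).
  rewrite hMu nsq_orth // nsq_rdiag /nsq mulr_sumr [X in _ <= X]big_mkcond /=.
  apply: ler_sum => j _; case: ifP => jp; last first.
    by rewrite hyp ?expr0n ?mulr0 // leqNgt jp.
  have [d0|cd] := hd j ltac:(by rewrite leq_min jp ltn_ord).
    by rewrite hyj d0 !mul0r expr0n mulr0.
  rewrite exprMn; apply: ler_wpM2r; first exact: sqr_ge0.
  by rewrite lerXn2r // ?nnegrE // ltW // (lt_le_trans c0 cd).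
have proj : (M *m Z)^T *m (M *m Z) = M *m Z by rewrite P3 mulmxA P1.
have hle : vnorm (M *m u) <= vnorm w by rewrite /u mulmxA vnorm_proj.
apply: le_trans hle; apply: sq_le_le; rewrite ?mulr_ge0 ?vnorm_ge0 ?(ltW c0) //.
by rewrite exprMn nu !vnorm_sq.
Qed.

End Aux5.

Local Open Scope ring_scope.

Section Aux6.
Variable R : realType.

Lemma rdiag_ext p q (d1 d2 : nat -> R) :
  (forall i, (i < minn p q)%N -> d1 i = d2 i) -> rdiag p q d1 = rdiag p q d2.
Proof.
move=> h; apply/matrixP => a b; rewrite !mxE; case: eqP => // e.
by rewrite h // leq_min ltn_ord e ltn_ord.
Qed.

Lemma rdiag_pid p q r : rdiag p q (fun i => if (i < r)%N then 1 else 0) = pid_mx r :> 'M[R]_(p, q).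
Proof. by apply/matrixP => a b; rewrite !mxE; case: eqP => _; case: ltnP. Qed.

Lemma rdiag_sq_entry p (d : nat -> R) (w : 'cV[R]_p) (j : 'I_p) :
  (rdiag p p d *m w) j 0 = d j * w j 0.
Proof.
rewrite mxE (bigD1 j) //= mxE eqxx big1 ?addr0 // => l /negbTE hl.
by rewrite mxE; case: eqP => [e|]; rewrite ?mul0r //; move: hl; rewrite -(inj_eq val_inj) /= e eqxx.
Qed.

Lemma mul_rdiag_entry p q (M : 'M[R]_(p, q)) e a (j : 'I_q) :
  (M *m rdiag q q e) a j = M a j * e j.
Proof.
rewrite mxE (bigD1 j) //= mxE eqxx big1 ?addr0 // => l /negbTE hl.
by rewrite mxE; case: eqP => [e'|]; rewrite ?mulr0 //; move: hl; rewrite -(inj_eq val_inj) /= e' eqxx.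
Qed.

Lemma topk_projE m (U : 'M[R]_m) k :
  topk_proj U k = U *m rdiag m m (fun i => if (i < k)%N then 1 else 0) *m U^T.
Proof.
apply/matrixP => a b; rewrite /topk_proj summxE [RHS]mxE big_mkcond /=.
apply: eq_bigr => j _; rewrite mul_rdiag_entry !mxE big_ord1 !mxE.
by case: ltnP; rewrite ?mulr1 ?mulr0 ?mul0r.
Qed.

Lemma rank_svd p q (M : 'M[R]_(p, q)) U d V :
  orthogonal_mx U -> orthogonal_mx V -> M = U *m rdiag p q d *m V^T ->
  \rank M = \rank (rdiag p q d).
Proof.
move=> hU hV hM; apply/eqP; rewrite eqn_leq; apply/andP; split.
  by rewrite hM; apply: (leq_trans (mxrankM_maxl _ _)); apply: mxrankM_maxr.
have -> : rdiag p q d = U^T *m M *m V.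
  by rewrite hM !mulmxA (hU : U^T *m U = 1%:M) mul1mx -mulmxA (hV : V^T *m V = 1%:M) mulmx1.
by apply: (leq_trans (mxrankM_maxl _ _)); apply: mxrankM_maxr.
Qed.

Lemma rank_rdiag_le p q (d : nat -> R) r : (r <= q)%N ->
  (forall i, (r <= i)%N -> (i < minn p q)%N -> d i = 0) -> (\rank (rdiag p q d) <= r)%N.
Proof.
move=> rq h.
have -> : rdiag p q d = rdiag p q d *m rdiag q q (fun i => if (i < r)%N then 1 else 0).
  rewrite rdiag_rmul; apply: rdiag_ext => i hi; case: ltnP => ir; rewrite ?mulr1 ?mulr0 //.
  by rewrite h.
apply: (leq_trans (mxrankM_maxr _ _)); rewrite rdiag_pid rank_pid_mx //.
Qed.

Lemma rank_rdiag_ge p q (d : nat -> R) r : (r <= p)%N -> (r <= q)%N ->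
  (forall i, (i < r)%N -> d i != 0) -> (r <= \rank (rdiag p q d))%N.
Proof.
move=> rp rq h.
have e : rdiag p q d *m rdiag q q (fun i => if (i < r)%N then (d i)^-1 else 0)
         = pid_mx r.
  rewrite rdiag_rmul -rdiag_pid; apply: rdiag_ext => i hi; case: ltnP => ir; rewrite ?mulr0 //.
  by rewrite mulfV // h.
have := mxrankM_maxl (rdiag p q d) (rdiag q q (fun i => if (i < r)%N then (d i)^-1 else 0)).
by rewrite e rank_pid_mx.
Qed.

End Aux6.

Local Open Scope ring_scope.

Section Aux7.
Variable R : realType.

Lemma nsq_le_of_vnorm p q (a : 'cV[R]_p) (b : 'cV[R]_q) : vnorm a <= vnorm b -> nsq a <= nsq b.
Proof.
move=> h; rewrite -!vnorm_sq; have := vnorm_ge0 a; have := vnorm_ge0 b; nra.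
Qed.

Lemma nonzero_row p q (C : 'M[R]_(p, q)) : C != 0 -> exists i, row i C != 0.
Proof.
move=> hC; case: (pickP (fun i => row i C != 0)) => [i hi | h]; first by exists i.
move/eqP: hC; case; apply/row_matrixP => i; have := h i; rewrite row0 /=.
by move/negbFE/eqP.
Qed.

Lemma interlace m n k (A : 'M[R]_(m, n)) U s V (Q : 'M[R]_m) Ua sa Va :
  (n <= m)%N -> (0 < k)%N -> (k <= n)%N ->
  is_svd A U s V -> is_svd (Q *m A) Ua sa Va -> Q^T *m Q = Q -> sa k.-1 <= s k.-1.
Proof.
move=> nm k0 kn [hU hV s0 sdec hA] [hUa hVa sa0 sadec hB] hQ.
have mn : minn m n = n by apply/minn_idPr.
rewrite mn in s0 sdec sa0 sadec.
set e1 := (fun i : nat => if (i < k.-1)%N then (1 : R) else 0).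
set e2 := (fun i : nat => if (i < k)%N then (1 : R) else 0).
set N := rdiag n n e1 *m V^T *m Va *m rdiag n n e2.
set S1 := kermx N^T.
set S2 := rdiag n n e2.
have rN : (\rank N <= k.-1)%N.
  apply: (leq_trans (mxrankM_maxl _ _)); apply: (leq_trans (mxrankM_maxl _ _)).
  apply: (leq_trans (mxrankM_maxl _ _)); rewrite /e1 rdiag_pid rank_pid_mx //; lia.
have rS1 : \rank S1 = (n - \rank N)%N by rewrite /S1 mxrank_ker mxrank_tr.
have rS2 : \rank S2 = k by rewrite /S2 /e2 rdiag_pid rank_pid_mx.
have hsum := mxrank_sum_cap S1 S2.
have hle := rank_leq_col (S1 + S2)%MS.
have hcap : (S1 :&: S2)%MS != 0.
  rewrite -mxrank_eq0; apply/eqP => h0; rewrite h0 in hsum; lia.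
have [i hi] := nonzero_row hcap.
set r := row i (S1 :&: S2)%MS.
have r1 : (r <= S1)%MS by apply: submx_trans (row_sub _ _) (capmxSl _ _).
have r2 : (r <= S2)%MS by apply: submx_trans (row_sub _ _) (capmxSr _ _).
have hrN : r *m N^T = 0 by apply/sub_kermxP.
have S2id : S2 *m S2 = S2.
  rewrite /S2 rdiag_rmul; apply: rdiag_ext => j _; rewrite /e2; case: ltnP; rewrite ?mulr1 ?mulr0 //.
have hr2 : r *m S2 = r by move/submxP: r2 => [D ->]; rewrite -mulmxA S2id.
set c := r^T.
have hc2 : S2 *m c = c by rewrite /c /S2 -{1}(rdiag_tr n n e2) -trmx_mul -/S2 hr2.
have hcN : N *m c = 0 by rewrite /c -(trmxK N) -trmx_mul hrN trmx0.
have cnz : c != 0.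
  by apply: contra hi => /eqP h; rewrite -/r -(trmxK r) -/c h trmx0.
set v := Va *m c.
set w := V^T *m v.
have hw1 : rdiag n n e1 *m w = 0.
  by rewrite -hcN /N /w /v -!mulmxA -/S2 hc2.
have cj : forall j : 'I_n, (k <= j)%N -> c j 0 = 0.
  move=> j kj; rewrite -hc2 rdiag_sq_entry /e2; case: ltnP => //; first by move=> h; lia.
  by rewrite mul0r.
have wj : forall j : 'I_n, (j < k.-1)%N -> w j 0 = 0.
  move=> j jk; have := congr1 (fun M : 'cV[R]_n => M j 0) hw1; rewrite /= rdiag_sq_entry /e1 /= jk mul1r => ->; by rewrite mxE.
have nc : 0 < nsq c.
  rewrite lt0r nsq_ge0 andbT; apply: contra cnz => /eqP h; apply/eqP; exact: nsq_eq0.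
have hlow : sa k.-1 ^+ 2 * nsq c <= nsq (Q *m A *m v).
  rewrite hB /v -!mulmxA (mulmxA Va^T) (hVa : Va^T *m Va = 1%:M) mul1mx nsq_orth //.
  rewrite nsq_rdiag /nsq mulr_sumr [X in _ <= X]big_mkcond /=; apply: ler_sum => l _.
  have jm : (l < m)%N by apply: leq_trans (ltn_ord l) nm.
  rewrite jm; case: (ltnP l k) => jk; last by rewrite cj // !mulr0 expr0n /= mulr0.
  rewrite exprMn; apply: ler_wpM2r; first exact: sqr_ge0.
  have h1 := sa0 k.-1 ltac:(lia).
  have h2 := sadec l k.-1 ltac:(lia) ltac:(lia).
  nra.
have hup : nsq (A *m v) <= s k.-1 ^+ 2 * nsq c.
  have -> : nsq c = nsq w by rewrite /w /v nsq_orth ?nsq_orth // orthT.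
  rewrite hA -!mulmxA nsq_orth // -/w.
  rewrite nsq_rdiag /nsq mulr_sumr [X in X <= _]big_mkcond /=; apply: ler_sum => l _.
  case: ifP => _; last by rewrite mulr_ge0 ?sqr_ge0.
  case: (ltnP l k.-1) => jk; first by rewrite wj // mulr0 expr0n mulr0.
  rewrite exprMn; apply: ler_wpM2r; first exact: sqr_ge0.
  have h1 := s0 l ltac:(exact: ltn_ord).
  have h2 := sdec k.-1 l jk ltac:(exact: ltn_ord).
  nra.
have hQv : nsq (Q *m A *m v) <= nsq (A *m v).
  by apply: nsq_le_of_vnorm; rewrite -mulmxA; apply: vnorm_proj.
have : sa k.-1 ^+ 2 <= s k.-1 ^+ 2.
  rewrite -(ler_pM2r nc); apply: le_trans hlow (le_trans hQv hup).
apply: sq_le_le; [apply: sa0 | apply: s0]; lia.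
Qed.

End Aux7.

Local Open Scope ring_scope.

Section Aux8.
Variable R : realType.

Lemma pinv_tr p q (M : 'M[R]_(p, q)) Z : is_pinv M Z -> is_pinv M^T Z^T.
Proof.
move=> [h1 h2 h3 h4]; split.
- by rewrite -!trmx_mul mulmxA h1.
- by rewrite -!trmx_mul mulmxA h2.
- by rewrite -trmx_mul h4.
- by rewrite -trmx_mul h3.
Qed.

Lemma svd_tr p q (M : 'M[R]_(p, q)) U d V : M = U *m rdiag p q d *m V^T ->
  M^T = V *m rdiag q p d *m U^T.
Proof. by move=> ->; rewrite !trmx_mul trmxK rdiag_tr mulmxA. Qed.

Lemma proj_compl p (P : 'M[R]_p) : P^T = P -> P *m P = P ->
  (1%:M - P)^T *m (1%:M - P) = 1%:M - P.
Proof.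
move=> h1 h2; rewrite trB trmx1 h1 mulmxBl !mulmxBr !mul1mx mulmx1 h2.
by rewrite subrr subr0.
Qed.

End Aux8.

Local Open Scope ring_scope.

Unset Implicit Arguments.
Set Strict Implicit.

Theorem lemma5 (R : realType) (m n k : nat) (A : 'M[R]_(m, n)) (b : 'cV[R]_m)
    (U : 'M[R]_m) (s : nat -> R) (V : 'M[R]_n)
    (Ut : 'M[R]_(m, k))
    (Ua : 'M[R]_m) (sa : nat -> R) (Va : 'M[R]_n)
    (X Xt : 'M[R]_(n, m)) :
  (n <= m)%N -> (0 < k)%N -> (k < \rank A)%N ->
  is_svd A U s V ->
  Ut^T *m Ut = 1%:M ->
  is_svd (Ut *m Ut^T *m A) Ua sa Va ->
  is_pinv (topk_proj U k *m A) X ->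
  is_pinv (Ut *m Ut^T *m A) Xt ->
  let xk := X *m b in
  let xtk := Xt *m b in
  let Delta := vnorm (A *m xtk - A *m xk) in
  sa k.-1 = 0 \/
  Delta <= (2 * s 0%N ^+ 2) / (sa k.-1 * s k.-1)
             * specnorm (Ut *m Ut^T - topk_proj U k) * vnorm b.
Proof.
move=> nm k0 krk hsvdA hUt hsvdB hX hY; cbv zeta.
have kn : (k < n)%N by apply: leq_trans krk (rank_leq_col _).
have mn : minn m n = n by apply/minn_idPr.
case: (eqVneq (sa k.-1) 0) => [->|sanz]; [by left | right].
have hsvdA' := hsvdA; have hsvdB' := hsvdB.
case: hsvdA => hU hV s0 sdec hA; case: hsvdB => hUa hVa sa0 sadec hB.
rewrite mn in s0 sdec sa0 sadec.
set Q := Ut *m Ut^T in hsvdB' hB hY *.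
set P := topk_proj U k in hX *.
set B := Q *m A in hB hY *.
set Y := Xt in hY *.
have sat0 : 0 < sa k.-1 by rewrite lt0r sanz sa0 //; lia.
have sk0 : 0 < s k.-1.
  rewrite lt0r s0 ?andbT; last lia.
  apply/eqP => h0; move: krk; rewrite (rank_svd hU hV hA).
  have : (\rank (rdiag m n s) <= k.-1)%N.
    apply: rank_rdiag_le; first lia.
    move=> i ki; rewrite mn => iN; apply/eqP; rewrite eq_le s0 // andbT -h0; exact: sdec.
  lia.
have sak : forall i, (k <= i)%N -> (i < n)%N -> sa i = 0.
  move=> i ki iN; apply/eqP; rewrite eq_le sa0 // andbT.
  apply: le_trans (sadec k i ki iN) _; rewrite leNgt; apply/negP => hk.
  have h1 : (k.+1 <= \rank (rdiag m n sa))%N.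
    apply: rank_rdiag_ge; [lia | lia | ] => j jk; rewrite gt_eqF //.
    by apply: lt_le_trans hk (sadec _ _ _ _); lia.
  have h2 : (\rank B <= k)%N.
    by rewrite /B /Q -mulmxA; apply: leq_trans (mxrankM_maxl _ _) (rank_leq_col _).
  move: h1; rewrite -(rank_svd hUa hVa hB); lia.
have hQT : Q^T = Q by rewrite /Q trmx_mul trmxK.
have hQQ : Q *m Q = Q by rewrite /Q mulmxA -(mulmxA Ut) hUt mulmx1.
have hQp : Q^T *m Q = Q by rewrite hQT hQQ.
have hint : sa k.-1 <= s k.-1 := interlace nm k0 (ltnW kn) hsvdA' hsvdB' hQp.
set e := (fun i : nat => if (i < k)%N then (1 : R) else 0).
have hP : P = U *m rdiag m m e *m U^T by rewrite /P topk_projE.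
have hPT : P^T = P by rewrite hP !trmx_mul trmxK rdiag_tr mulmxA.
have hPP : P *m P = P.
  rewrite hP -!mulmxA (mulmxA U^T) (hU : U^T *m U = 1%:M) mul1mx (mulmxA (rdiag m m e)) rdiag_rmul.
  rewrite !mulmxA; congr (_ *m _ *m _); apply: rdiag_ext => i _; rewrite /e; case: ifP; rewrite ?mulr1 ?mulr0 //.
have ss0 : 0 <= s 0%N by apply: s0; lia.
have skle : s k.-1 <= s 0%N by apply: sdec; lia.
have bA : forall w, vnorm (A *m w) <= s 0%N * vnorm w.
  apply: (svd_upper hU hV hA ss0) => i; rewrite mn => hi.
  have := s0 i hi; have := sdec 0%N i (leq0n _) hi; nra.
have bAT : forall w, vnorm (A^T *m w) <= s 0%N * vnorm w.
  apply: (svd_upperT hU hV hA ss0) => i; rewrite mn => hi.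
  have := s0 i hi; have := sdec 0%N i (leq0n _) hi; nra.
have hPA : P *m A = U *m rdiag m n (fun i => e i * s i) *m V^T.
  rewrite hP hA -!mulmxA (mulmxA U^T) (hU : U^T *m U = 1%:M) mul1mx.
  by rewrite (mulmxA (rdiag m m e)) rdiag_lmul !mulmxA.
have condX : forall i, (i < minn m n)%N -> e i * s i = 0 \/ s k.-1 <= e i * s i.
  move=> i; rewrite mn => hi; rewrite /e; case: ltnP => ik.
    by right; rewrite mul1r; apply: sdec; lia.
  by left; rewrite mul0r.
have bX : forall w, s k.-1 * vnorm (X *m w) <= vnorm w := pinv_bound hU hV hPA sk0 condX hX.
have bXT : forall w, s k.-1 * vnorm (X^T *m w) <= vnorm w.
  apply: (pinv_bound hV hU (svd_tr hPA) sk0 _ (pinv_tr hX)).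
  by move=> i; rewrite minnC; apply: condX.
have bY : forall w, sa k.-1 * vnorm (Y *m w) <= vnorm w.
  apply: (pinv_bound hUa hVa hB sat0) => // i; rewrite mn => hi.
  case: (ltnP i k) => ik; first by right; apply: sadec; lia.
  by left; apply: sak.
case: hX => X1 X2 X3 X4.
have hXa : X = A^T *m P *m X^T *m X.
  by rewrite -{1}X2 -X4 trmx_mul trmx_mul hPT.
have h1 : (1%:M - P) *m A = U *m rdiag m n (fun i => s i - e i * s i) *m V^T.
  rewrite mulmxBl mul1mx hPA {1}hA -mulmxBl -mulmxBr.
  by rewrite rdiag_opp rdiag_add.
have h2 : A^T *m P = V *m rdiag n m (fun i => e i * s i) *m U^T.
  by rewrite -{1}hPT -trmx_mul (svd_tr hPA).
have hcompl : (1%:M - P) *m A *m A^T *m P = 0.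
  rewrite -mulmxA h2 h1 -!mulmxA (mulmxA V^T) (hV : V^T *m V = 1%:M) mul1mx.
  rewrite (mulmxA (rdiag m n _)) rdiag_mul0 ?mul0mx ?mulmx0 // => i.
  rewrite /e; case: ifP => _; rewrite ?mul1r ?mul0r ?subrr ?mul0r ?mulr0 //.
set z := (fun i : nat => if (i < k)%N then (s i)^-1 else 0).
have hZ : P *m A *m (V *m rdiag n m z *m U^T) = P.
  rewrite hPA -!mulmxA (mulmxA V^T) (hV : V^T *m V = 1%:M) mul1mx.
  rewrite (mulmxA (rdiag m n _)) rdiag_mulsq hP !mulmxA; congr (_ *m _ *m _).
  apply: rdiag_ext => i _; rewrite /e /z; case: (ltnP i n) => iN; last first.
    have ik : (i < k)%N = false by apply/negbTE; rewrite -leqNgt; lia.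
    by rewrite ik.
  case: (ltnP i k) => ik; last by rewrite !mul0r.
  rewrite mul1r mulfV //; apply/eqP => h0.
  have := sdec i k.-1 ltac:(lia) ltac:(lia); rewrite h0 => h.
  by move: sk0; rewrite ltNge h.
have hPAXP : P *m A *m X *m P = P.
  rewrite -{2}hZ !mulmxA -(mulmxA (P *m A *m X) P A) X1; rewrite !mulmxA in hZ; exact: hZ.
have hPAX : P *m A *m X = P.
  have e1 : P *m (P *m A *m X) = P *m A *m X by rewrite !mulmxA hPP.
  by rewrite -X3 -e1 trmx_mul X3 hPT hPAXP.
have hAX : A *m X = P.
  have -> : A *m X = P *m A *m X + (1%:M - P) *m A *m X.
    by rewrite -mulmxDl -mulmxDl addrC subrK mul1mx.
  rewrite hPAX {1}hXa !mulmxA hcompl !mul0mx addr0 //.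
case: hY => Y1 Y2 Y3 Y4.
have hBT : B^T = A^T *m Q by rewrite /B trmx_mul hQT.
have hYe : Y = Y *m Y^T *m A^T *m Q.
  by rewrite -{1}Y2 -mulmxA -Y3 trmx_mul hBT !mulmxA.
have hYQ : Y *m Q = Y by rewrite {1}hYe -(mulmxA _ Q Q) hQQ -hYe.
have hYB0 : (1%:M - Y *m B) *m B^T = 0.
  by rewrite mulmxBl mul1mx -{1}Y4 -trmx_mul mulmxA Y1 subrr.
have hYBp : (1%:M - Y *m B)^T *m (1%:M - Y *m B) = 1%:M - Y *m B.
  by apply: proj_compl => //; rewrite mulmxA Y2.
have hPp : (1%:M - P)^T *m (1%:M - P) = 1%:M - P by apply: proj_compl.
set T1 := A *m Y *m (Q - P) *m (1%:M - P).
set T2 := A *m ((1%:M - Y *m B) *m A^T *m (P - Q)) *m X^T *m X.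
have hT1 : T1 = A *m Y - A *m Y *m P.
  rewrite /T1 -mulmxA.
  have -> : (Q - P) *m (1%:M - P) = Q - Q *m P.
    by rewrite mulmxBr mulmx1 mulmxBl hPP opprB addrA subrK.
  by rewrite mulmxBr (mulmxA (A *m Y) Q P) -(mulmxA A Y Q) hYQ.
have hmid : (1%:M - Y *m B) *m A^T *m (P - Q) = (1%:M - Y *m B) *m A^T *m P.
  by rewrite mulmxBr -(mulmxA _ A^T Q) -hBT hYB0 subr0.
have hT2 : T2 = A *m X - A *m Y *m P.
  rewrite /T2 hmid.
  have -> : A *m ((1%:M - Y *m B) *m A^T *m P) *m X^T *m X = A *m (1%:M - Y *m B) *m (A^T *m P *m X^T *m X).
    by rewrite !mulmxA.
  rewrite -hXa mulmxBr mulmx1 mulmxBl.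
  have hBX : B *m X = Q *m P by rewrite /B -mulmxA hAX.
  by congr (_ - _); rewrite -!mulmxA hAX (mulmxA Ut Ut^T P) -/Q (mulmxA Y Q P) hYQ.
have hdiff : A *m Y - A *m X = T1 - T2 by rewrite hT1 hT2 opprB addrA subrK.
rewrite !mulmxA -mulmxBl hdiff mulmxBl.
apply: le_trans (vnormB _ _) _.
have sn0 : 0 <= specnorm (Q - P) := specnorm_ge0 _.
have nb0 := vnorm_ge0 b.
have bY' : forall w, vnorm (Y *m w) <= (sa k.-1)^-1 * vnorm w.
  move=> w; rewrite -(ler_pM2l sat0) mulrA mulfV ?mul1r ?gt_eqF //; exact: bY.
have bX' : forall w, vnorm (X *m w) <= (s k.-1)^-1 * vnorm w.
  move=> w; rewrite -(ler_pM2l sk0) mulrA mulfV ?mul1r ?gt_eqF //; exact: bX.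
have bXT' : forall w, vnorm (X^T *m w) <= (s k.-1)^-1 * vnorm w.
  move=> w; rewrite -(ler_pM2l sk0) mulrA mulfV ?mul1r ?gt_eqF //; exact: bXT.
have ci0 : 0 <= (sa k.-1)^-1 by rewrite invr_ge0 ltW.
have di0 : 0 <= (s k.-1)^-1 by rewrite invr_ge0 ltW.
have hb1 : vnorm (T1 *m b) <= s 0%N * ((sa k.-1)^-1 * (specnorm (Q - P) * vnorm b)).
  rewrite /T1 -!mulmxA.
  apply: le_trans (bA _) _; apply: (ler_wpM2l ss0).
  apply: le_trans (bY' _) _; apply: (ler_wpM2l ci0).
  apply: le_trans (specnorm_bound _ _) _; apply: (ler_wpM2l sn0).
  exact: vnorm_proj hPp.
have hb2 : vnorm (T2 *m b) <= s 0%N * (s 0%N * (specnorm (Q - P) * ((s k.-1)^-1 * ((s k.-1)^-1 * vnorm b)))).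
  rewrite /T2 -!mulmxA.
  apply: le_trans (bA _) _; apply: (ler_wpM2l ss0).
  apply: le_trans (vnorm_proj _ hYBp) _.
  apply: le_trans (bAT _) _; apply: (ler_wpM2l ss0).
  rewrite -opprB mulNmx vnormN.
  apply: le_trans (specnorm_bound _ _) _; apply: (ler_wpM2l sn0).
  apply: le_trans (bXT' _) _; apply: (ler_wpM2l di0).
  exact: bX'.
apply: le_trans (lerD hb1 hb2) _.
set a := s 0%N; set c := sa k.-1; set d := s k.-1; set sn := specnorm (Q - P); set nb := vnorm b.
rewrite invfM.
have i0 : 1 <= a * d^-1 by rewrite ler_pdivlMr // mul1r.
have i1 : d^-1 <= c^-1 by rewrite lef_pV2 // posrE.
have K0 : 0 <= a * sn * nb by rewrite !mulr_ge0.
have j1 : a * sn * nb * c^-1 <= a * sn * nb * c^-1 * (a * d^-1) by apply: ler_peMr => //; rewrite mulr_ge0.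
have j2 : a * sn * nb * a * d^-1 * d^-1 <= a * sn * nb * a * d^-1 * c^-1.
  by apply: ler_wpM2l => //; rewrite !mulr_ge0.
have e1 : a * (c^-1 * (sn * nb)) = a * sn * nb * c^-1 by ring.
have e2 : a * (a * (sn * (d^-1 * (d^-1 * nb)))) = a * sn * nb * a * d^-1 * d^-1 by ring.
have e3 : 2 * a ^+ 2 * (c^-1 * d^-1) * sn * nb = a * sn * nb * c^-1 * (a * d^-1) + a * sn * nb * a * d^-1 * c^-1 by ring.
rewrite e1 e2 e3; exact: lerD.
Qed.
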